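(* Let $R$ be a commutative ring with identity, $\mathcal S$ an associative $R$-algebra with identity, $\mathcal M$ a $2$-torsion free bimodule over $\mathcal S$, $\delta$ a derivation on $\mathcal S$ and $f:\mathcal S\to\mathcal M$ a bimodule homomorphism over $\mathcal S$. If $D:\mathcal S\to\mathcal M$ is a Jordan $(\delta,f)$-derivation on $\mathcal M$, then $D(xyx)=D(x)yx+f(x)\delta(y)x+f(x)y\delta(x)$ for all $x,y\in\mathcal S$.
   Context: A derivation on $\mathcal S$ is an additive map $\delta$ with $\delta(ab)=\delta(a)b+a\delta(b)$. An additive map $D:\mathcal S\to\mathcal M$ is a Jordan $(\delta,f)$-derivation if $D(x^2)=D(x)x+f(x)\delta(x)$ for all $x\in\mathcal S$. $\mathcal M$ is $2$-torsion free if $2m=0$ implies $m=0$. *)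

(* Defs.v *)
From HB Require Import structures.
From mathcomp Require Import all_boot all_order all_algebra.
Set Implicit Arguments. Unset Strict Implicit. Unset Printing Implicit Defensive.
Import GRing.Theory.
Local Open Scope ring_scope.

Record is_bimodule (S : nzRingType) (M : zmodType)
    (lm : S -> M -> M) (rm : M -> S -> M) : Prop := IsBimodule {
  bm_lD : forall a b m, lm (a + b) m = lm a m + lm b m;
  bm_lDm : forall a m n, lm a (m + n) = lm a m + lm a n;
  bm_lM : forall a b m, lm (a * b) m = lm a (lm b m);
  bm_l1 : forall m, lm 1 m = m;
  bm_rD : forall m a b, rm m (a + b) = rm m a + rm m b;
  bm_rDm : forall m n a, rm (m + n) a = rm m a + rm n a;
  bm_rM : forall m a b, rm m (a * b) = rm (rm m a) b;
  bm_r1 : forall m, rm m 1 = m;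
  bm_lr : forall a m b, lm a (rm m b) = rm (lm a m) b
}.

Definition two_torsion_free (M : zmodType) : Prop :=
  forall m : M, m *+ 2 = 0 -> m = 0.

Definition is_derivation (S : nzRingType) (delta : S -> S) : Prop :=
  (forall a b, delta (a + b) = delta a + delta b) /\
  (forall a b, delta (a * b) = delta a * b + a * delta b).

Definition is_bimodule_hom (S : nzRingType) (M : zmodType)
    (lm : S -> M -> M) (rm : M -> S -> M) (f : S -> M) : Prop :=
  (forall a b, f (a + b) = f a + f b) /\
  (forall a x, f (a * x) = lm a (f x)) /\
  (forall x a, f (x * a) = rm (f x) a).

Definition is_jordan_df_derivation (S : nzRingType) (M : zmodType)
    (rm : M -> S -> M) (delta : S -> S) (f : S -> M) (D : S -> M) : Prop :=
  (forall a b, D (a + b) = D a + D b) /\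
  (forall x, D (x * x) = rm (D x) x + rm (f x) (delta x)).

(* Main.v *)
Require Import Defs.
From HB Require Import structures.
From mathcomp Require Import all_boot all_order all_algebra.
Import GRing.Theory.
Local Open Scope ring_scope.

Lemma ac_move (V : zmodType) (l t r r' : V) : r = r' + t -> l = r' -> l + t = r.
Proof. by move=> -> ->. Qed.
Lemma bring_left (V : zmodType) (t u : V) : t + u = u + t.
Proof. exact: addrC. Qed.
Lemma bring_rec (V : zmodType) (r1 e1 t u : V) : r1 = e1 + t -> r1 + u = e1 + u + t.
Proof. by move=> ->; rewrite addrAC. Qed.

Ltac bring := match goal with
 | |- ?r1 + ?t0 = ?e + ?t => unify t0 t; reflexivity
 | |- ?t0 + ?u = ?e + ?t => unify t0 t; apply: bring_left
 | |- ?r1 + ?u = ?e + ?t => eapply bring_rec; bring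
end.
Ltac ac_step := match goal with |- ?l + ?t = ?r =>
  eapply (@ac_move _ l t r); [bring | ] end.
Ltac ac := repeat (first [reflexivity | ac_step]).

Theorem lemma3p5 (R : comNzRingType) (S : algType R) (M : zmodType)
    (lm : S -> M -> M) (rm : M -> S -> M)
    (delta : S -> S) (f D : S -> M) :
  is_bimodule lm rm ->
  two_torsion_free M ->
  is_derivation delta ->
  is_bimodule_hom lm rm f ->
  is_jordan_df_derivation rm delta f D ->
  forall x y : S,
    D (x * y * x) =
      rm (rm (D x) y) x + rm (rm (f x) (delta y)) x + rm (rm (f x) y) (delta x).
Proof.
move=> bm tf [dD dM] [fD [fl fr]] [DD DJ] x y.
have L : forall a b, D (a * b + b * a) =
   rm (D a) b + rm (D b) a + rm (f a) (delta b) + rm (f b) (delta a).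
  move=> a b.
  have e : (a + b) * (a + b) = a * a + b * b + (a * b + b * a).
    by rewrite mulrDl !mulrDr !addrA; ac.
  have := DJ (a + b); rewrite e DD DD (DD a b) !DJ !fD !dD !(bm_rD bm) !(bm_rDm bm) => H.
  apply: (@addrI _ (rm (D a) a + rm (f a) (delta a) + (rm (D b) b + rm (f b) (delta b)))).
  rewrite H !addrA; ac.
have e2 : x * (x * y + y * x) + (x * y + y * x) * x
     = (x * x * y + y * (x * x)) + (x * y * x + x * y * x).
  by rewrite mulrDr mulrDl !mulrA !addrA; ac.
have K := L x (x * y + y * x).
rewrite e2 DD (DD (x*y*x)) (L (x*x) y) in K.
rewrite DJ (L x y) in K.
rewrite ?(fD, dD, dM, fr, bm_rD bm, bm_rDm bm, mulrDl, mulrDr) in K.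
rewrite -!(bm_rM bm) ?mulrA in K.
rewrite -!(bm_rM bm).
match goal with |- ?Z = ?G => match type of K with ?A + _ = ?B =>
  have E : B = A + (G + G) by rewrite !addrA; ac
end end.
rewrite E in K; move/addrI: K => K.
apply/eqP; rewrite -subr_eq0; apply/eqP; apply: tf.
by rewrite mulrnBl !mulr2n K subrr.
Qed.
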